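(* Let $\mathcal M$ be a small symmetric monoidal category. Then there is an isomorphism of short exact sequences of commutative monoids $$\begin{array}{ccccc} K(\mathrm{Pic}(\mathcal M)) & \xrightarrow{K(\iota_{\mathcal M})} & K(\mathcal M) & \xrightarrow{K(\pi_{\mathcal M})} & K(P(\mathcal M))\\ \downarrow\cong && \| && \downarrow\cong\\ U(K\mathcal M) & \longrightarrow & K(\mathcal M) & \longrightarrow & K(\mathcal M)/U(K\mathcal M)\end{array}$$ (commutative diagram with vertical isomorphisms and middle map the identity), where the bottom row consists of the inclusion and the quotient map. Moreover, writing $\mathrm{Pic}[\mathcal M]=K(\mathrm{Pic}(\mathcal M))$ and $\mathrm{Pure}[\mathcal M]=K(P(\mathcal M))$, the short exact sequence $\mathrm{Pic}[\mathcal M]\to K(\mathcal M)\to\mathrm{Pure}[\mathcal M]$ is a homotopy invariant of $\mathcal M$: any symmetric monoidal equivalence $\mathcal M\simeq\mathcal N$ induces an isomorphism between the corresponding exact sequences of $\mathcal M$ and $\mathcal N$.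
   Context: For a small symmetric monoidal category $\mathcal M$, $K(\mathcal M)$ is the commutative monoid of isomorphism classes $\langle X\rangle$ of objects of $\mathcal M$ with $\langle X\rangle\langle Y\rangle=\langle X\otimes Y\rangle$ and unit $\langle I\rangle$; $K$ is a functor on symmetric (strong) monoidal functors. An object $A$ is weakly invertible if $A\otimes B\cong B\otimes A\cong I$ for some $B$; $\mathrm{Pic}(\mathcal M)$ is the subcategory of weakly invertible objects and isomorphisms, and $\iota_{\mathcal M}$ its inclusion. $P(\mathcal M)$ is the symmetric monoidal category with the same objects as $\mathcal M$, morphisms $X\to Y$ the classes $[A,f]$ of pairs with $A$ weakly invertible and $f\colon X\to Y\otimes A$, where $(A,f)\sim(A',f')$ iff there is an isomorphism $\alpha\colon A\to A'$ with $(Y\otimes\alpha)f=f'$; composition $[B,g]\circ[A,f]=[B\otimes A,\ a_{Z,B,A}(g\otimes A)f]$, identities $[I,r_X^{-1}]$, tensor on objects as in $\mathcal M$, tensor of $[A,f]$ and $[A',f']$ equal to $[A\otimes A',g]$ with $g$ being $f\otimes f'$ followed by the canonical reassociation using the symmetry $b_{A,Y'}$ into $(Y\otimes Y')\otimes(A\otimes A')$, and structure isomorphisms the images under $\pi_{\mathcal M}$; $\pi_{\mathcal M}\colon\mathcal M\to P(\mathcal M)$ is identity on objects and $f\colon X\to Y$ goes to $[I,r_Y^{-1}f]$. For a commutative monoid $M$, $U(M)$ is the group of invertible elements, and $M/U(M)$ is the quotient of $M$ by the congruence $x\sim y\iff x=uy$ for some $u\in U(M)$; the sequence $U(M)\hookrightarrow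 M\to M/U(M)$ is the exact sequence of $M$ in the torsion theory on commutative monoids whose torsion objects are abelian groups and torsion-free objects are monoids whose only invertible element is the unit. *)

(* Defs.v *)
From Stdlib Require Import ClassicalEpsilon FunctionalExtensionality
  PropExtensionality ProofIrrelevance.

Set Implicit Arguments.
Unset Strict Implicit.

Record SMC := {
  Ob : Type;
  Hom : Ob -> Ob -> Type;
  idm : forall X, Hom X X;
  comp : forall X Y Z, Hom Y Z -> Hom X Y -> Hom X Z;
  comp_assoc : forall X Y Z W (h : Hom Z W) (g : Hom Y Z) (f : Hom X Y),
      comp h (comp g f) = comp (comp h g) f;
  comp_idl : forall X Y (f : Hom X Y), comp (idm Y) f = f;
  comp_idr : forall X Y (f : Hom X Y), comp f (idm X) = f;
  tens : Ob -> Ob -> Ob;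
  tensm : forall X X' Y Y', Hom X X' -> Hom Y Y' -> Hom (tens X Y) (tens X' Y');
  tens_id : forall X Y, tensm (idm X) (idm Y) = idm (tens X Y);
  tens_comp : forall X X' X'' Y Y' Y'' (g : Hom X' X'') (f : Hom X X')
      (g' : Hom Y' Y'') (f' : Hom Y Y'),
      tensm (comp g f) (comp g' f') = comp (tensm g g') (tensm f f');
  unit : Ob;
  asc : forall X Y Z, Hom (tens (tens X Y) Z) (tens X (tens Y Z));
  asc_inv : forall X Y Z, Hom (tens X (tens Y Z)) (tens (tens X Y) Z);
  asc_invl : forall X Y Z, comp (asc_inv X Y Z) (asc X Y Z) = idm _;
  asc_invr : forall X Y Z, comp (asc X Y Z) (asc_inv X Y Z) = idm _;
  asc_nat : forall X X' Y Y' Z Z' (f : Hom X X') (g : Hom Y Y') (h : Hom Z Z'),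
      comp (asc X' Y' Z') (tensm (tensm f g) h)
      = comp (tensm f (tensm g h)) (asc X Y Z);
  lu : forall X, Hom (tens unit X) X;
  lu_inv : forall X, Hom X (tens unit X);
  lu_invl : forall X, comp (lu_inv X) (lu X) = idm _;
  lu_invr : forall X, comp (lu X) (lu_inv X) = idm _;
  lu_nat : forall X Y (f : Hom X Y), comp f (lu X) = comp (lu Y) (tensm (idm unit) f);
  ru : forall X, Hom (tens X unit) X;
  ru_inv : forall X, Hom X (tens X unit);
  ru_invl : forall X, comp (ru_inv X) (ru X) = idm _;
  ru_invr : forall X, comp (ru X) (ru_inv X) = idm _;
  ru_nat : forall X Y (f : Hom X Y), comp f (ru X) = comp (ru Y) (tensm f (idm unit));
  br : forall X Y, Hom (tens X Y) (tens Y X);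
  br_nat : forall X X' Y Y' (f : Hom X X') (g : Hom Y Y'),
      comp (br X' Y') (tensm f g) = comp (tensm g f) (br X Y);
  br_inv : forall X Y, comp (br Y X) (br X Y) = idm _;
  pentagon : forall W X Y Z,
      comp (asc W X (tens Y Z)) (asc (tens W X) Y Z)
      = comp (tensm (idm W) (asc X Y Z))
             (comp (asc W (tens X Y) Z) (tensm (asc W X Y) (idm Z)));
  triangle : forall X Y,
      comp (tensm (idm X) (lu Y)) (asc X unit Y) = tensm (ru X) (idm Y);
  hexagon : forall X Y Z,
      comp (asc Y Z X) (comp (br X (tens Y Z)) (asc X Y Z))
      = comp (tensm (idm Y) (br X Z))
             (comp (asc Y X Z) (tensm (br X Y) (idm Z)))
}.

Arguments Hom {s}.
Arguments idm {s}.
Arguments comp {s X Y Z}.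
Arguments tens {s}.
Arguments tensm {s X X' Y Y'}.
Arguments unit {s}.
Arguments asc {s}.
Arguments asc_inv {s}.
Arguments lu {s}.
Arguments lu_inv {s}.
Arguments ru {s}.
Arguments ru_inv {s}.
Arguments br {s}.

Section IsoTheory.
Variable M : SMC.

Definition is_iso (X Y : Ob M) (f : Hom X Y) : Prop :=
  exists g : Hom Y X, comp g f = idm X /\ comp f g = idm Y.

Definition iso (X Y : Ob M) : Prop := exists f : Hom X Y, is_iso f.

Definition winv (A : Ob M) : Prop :=
  exists B : Ob M, iso (tens A B) unit /\ iso (tens B A) unit.

Lemma iso_refl X : iso X X.
Proof. exists (idm X), (idm X); rewrite comp_idl; auto. Qed.

Lemma iso_sym X Y : iso X Y -> iso Y X.
Proof. intros [f [g [H1 H2]]]; exists g, f; auto. Qed.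

Lemma iso_trans X Y Z : iso X Y -> iso Y Z -> iso X Z.
Proof.
  intros [f [f' [H1 H2]]] [g [g' [H3 H4]]].
  exists (comp g f), (comp f' g'); split.
  - rewrite comp_assoc, <- (comp_assoc f' g' g), H3, comp_idr; auto.
  - rewrite comp_assoc, <- (comp_assoc g f f'), H2, comp_idr; auto.
Qed.

Lemma iso_tens X X' Y Y' : iso X X' -> iso Y Y' -> iso (tens X Y) (tens X' Y').
Proof.
  intros [f [f' [H1 H2]]] [g [g' [H3 H4]]].
  exists (tensm f g), (tensm f' g');
  rewrite <- !tens_comp, H1, H2, H3, H4, !tens_id; auto.
Qed.

Lemma iso_asc X Y Z : iso (tens (tens X Y) Z) (tens X (tens Y Z)).
Proof. exists (asc X Y Z), (asc_inv X Y Z); split; apply M. Qed.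

Lemma iso_lu X : iso (tens unit X) X.
Proof. exists (lu X), (lu_inv X); split; apply M. Qed.

Lemma iso_ru X : iso (tens X unit) X.
Proof. exists (ru X), (ru_inv X); split; apply M. Qed.

Lemma iso_br X Y : iso (tens X Y) (tens Y X).
Proof. exists (br X Y), (br Y X); split; apply br_inv. Qed.

Lemma winv_unit : winv unit.
Proof. exists unit; split; apply iso_lu. Qed.

Lemma winv_tens A A' : winv A -> winv A' -> winv (tens A A').
Proof.
  intros [B [H1 H2]] [B' [H3 H4]]; exists (tens B' B); split.
  - eapply iso_trans; [apply iso_asc|].
    eapply iso_trans; [apply iso_tens; [apply iso_refl| apply iso_sym, iso_asc]|].
    eapply iso_trans; [apply iso_tens; [apply iso_refl| apply iso_tens; [exact H3|apply iso_refl]]|].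
    eapply iso_trans; [apply iso_tens; [apply iso_refl| apply iso_lu]|].
    exact H1.
  - eapply iso_trans; [apply iso_asc|].
    eapply iso_trans; [apply iso_tens; [apply iso_refl| apply iso_sym, iso_asc]|].
    eapply iso_trans; [apply iso_tens; [apply iso_refl| apply iso_tens; [exact H2|apply iso_refl]]|].
    eapply iso_trans; [apply iso_tens; [apply iso_refl| apply iso_lu]|].
    exact H4.
Qed.

(* The category P(M): morphisms X -> Y are classes [A,f] with A weakly
   invertible and f : X -> Y (x) A.                                    *)
Record Pmor (X Y : Ob M) := {
  pA : Ob M;
  pA_winv : winv pA;
  pf : Hom X (tens Y pA)
}.

Definition Pequiv (X Y : Ob M) (p q : Pmor X Y) : Prop :=
  exists alpha : Hom (pA p) (pA q),
    is_iso alpha /\ comp (tensm (idm Y) alpha) (pf p) = pf q.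

Definition Pcomp (X Y Z : Ob M) (g : Pmor Y Z) (f : Pmor X Y) : Pmor X Z :=
  {| pA := tens (pA g) (pA f);
     pA_winv := winv_tens (pA_winv g) (pA_winv f);
     pf := comp (asc Z (pA g) (pA f)) (comp (tensm (pf g) (idm (pA f))) (pf f)) |}.

Definition Pid (X : Ob M) : Pmor X X :=
  {| pA := unit; pA_winv := winv_unit; pf := ru_inv X |}.

Definition Piso (X Y : Ob M) : Prop :=
  exists (f : Pmor X Y) (g : Pmor Y X),
    Pequiv (Pcomp g f) (Pid X) /\ Pequiv (Pcomp f g) (Pid Y).

End IsoTheory.

Arguments is_iso {M X Y}.
Arguments iso {M}.
Arguments winv {M}.
Arguments Piso {M}.

Definition Quot (T : Type) (R : T -> T -> Prop) : Type :=
  {P : T -> Prop | exists x, P = R x}.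

Definition class (T : Type) (R : T -> T -> Prop) (x : T) : Quot R :=
  exist _ (R x) (ex_intro _ x eq_refl).

Definition rep (T : Type) (R : T -> T -> Prop) (c : Quot R) : T :=
  proj1_sig (constructive_indefinite_description _ (proj2_sig c)).

Lemma Quot_eq T (R : T -> T -> Prop) (c d : Quot R) :
  proj1_sig c = proj1_sig d -> c = d.
Proof.
  destruct c as [P HP], d as [Q HQ]; simpl; intros ->.
  f_equal; apply proof_irrelevance.
Qed.

Lemma class_rep T (R : T -> T -> Prop) (c : Quot R) : class R (rep c) = c.
Proof.
  apply Quot_eq; unfold rep; simpl.
  destruct (constructive_indefinite_description _ (proj2_sig c)) as [x Hx].
  simpl; symmetry; exact Hx.
Qed.

Section QuotEquiv.
Variables (T : Type) (R : T -> T -> Prop).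
Hypothesis Rrefl : forall x, R x x.
Hypothesis Rsym : forall x y, R x y -> R y x.
Hypothesis Rtrans : forall x y z, R x y -> R y z -> R x z.

Lemma class_eq x y : R x y -> class R x = class R y.
Proof.
  intro H; apply Quot_eq; simpl.
  apply functional_extensionality; intro z; apply propositional_extensionality.
  split; intro Hz; eauto.
Qed.

Lemma rep_class x : R (rep (class R x)) x.
Proof.
  assert (E := class_rep (class R x)).
  apply (f_equal (@proj1_sig _ _)) in E; simpl in E.
  apply Rsym; rewrite <- E; apply Rrefl.
Qed.
End QuotEquiv.

Record MonStr := {
  mcar :> Type;
  mop : mcar -> mcar -> mcar;
  mone : mcar
}.
Arguments mop {m}.
Arguments mone {m}.

Record ComMonoid := {
  cm_str :> MonStr;
  cm_assoc : forall x y z : cm_str, mop x (mop y z) = mop (mop x y) z;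
  cm_comm : forall x y : cm_str, mop x y = mop y x;
  cm_unitl : forall x : cm_str, mop mone x = x
}.

Definition mon_hom (A B : MonStr) (f : A -> B) : Prop :=
  (forall x y, f (mop x y) = mop (f x) (f y)) /\ f mone = mone.

Definition mon_iso (A B : MonStr) (f : A -> B) : Prop :=
  mon_hom f /\ exists g : B -> A, (forall x, g (f x) = x) /\ (forall y, f (g y) = y).

Definition KQ (T : Type) (R : T -> T -> Prop) (t : T -> T -> T) (i : T) : MonStr :=
  {| mcar := Quot R; mop := fun c d => class R (t (rep c) (rep d)); mone := class R i |}.

Definition Kmap T T' (R : T -> T -> Prop) (R' : T' -> T' -> Prop) (f : T -> T')
  (c : Quot R) : Quot R' := class R' (f (rep c)).

Definition is_unit (A : ComMonoid) (x : A) : Prop := exists y, mop x y = mone.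

Lemma is_unit_mop (A : ComMonoid) (x y : A) :
  is_unit x -> is_unit y -> is_unit (mop x y).
Proof.
  intros [x' Hx] [y' Hy]; exists (mop y' x').
  rewrite cm_assoc, <- (cm_assoc x y y'), Hy, (cm_comm x mone), cm_unitl; exact Hx.
Qed.

Lemma is_unit_one (A : ComMonoid) : is_unit (@mone A).
Proof. exists mone; apply cm_unitl. Qed.

Definition Ucar (A : ComMonoid) := {x : A | is_unit x}.

Definition Umon (A : ComMonoid) : MonStr :=
  {| mcar := Ucar A;
     mop := fun u v => exist _ (mop (proj1_sig u) (proj1_sig v))
                             (is_unit_mop (proj2_sig u) (proj2_sig v));
     mone := exist _ mone (is_unit_one A) |}.

Definition Urel (A : ComMonoid) (x y : A) : Prop := exists u, is_unit u /\ x = mop u y.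

Definition QUmon (A : ComMonoid) : MonStr :=
  {| mcar := Quot (@Urel A);
     mop := fun c d => class (@Urel A) (mop (rep c) (rep d));
     mone := class (@Urel A) mone |}.

Definition Uincl (A : ComMonoid) (u : Ucar A) : A := proj1_sig u.
Definition Uquot (A : ComMonoid) (x : A) : Quot (@Urel A) := class (@Urel A) x.

Section K.
Variable M : SMC.

Definition Kset : MonStr := KQ (@iso M) (@tens M) unit.

Lemma Kset_assoc (x y z : Kset) : mop x (mop y z) = mop (mop x y) z.
Proof.
  simpl; apply class_eq; eauto using iso_refl, iso_sym, iso_trans.
  eapply iso_trans; [apply iso_tens; [apply iso_refl| apply rep_class]|];
    eauto using iso_refl, iso_sym, iso_trans.
  eapply iso_trans; [|apply iso_sym, iso_tens; [apply rep_class|apply iso_refl]];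
    eauto using iso_refl, iso_sym, iso_trans.
  apply iso_sym, iso_asc.
Qed.

Lemma Kset_comm (x y : Kset) : mop x y = mop y x.
Proof. simpl; apply class_eq; eauto using iso_refl, iso_sym, iso_trans, iso_br. Qed.

Lemma Kset_unitl (x : Kset) : mop mone x = x.
Proof.
  simpl; rewrite <- (class_rep x) at 2; apply class_eq;
    eauto using iso_refl, iso_sym, iso_trans.
  eapply iso_trans; [apply iso_tens; [apply rep_class|apply iso_refl]|];
    eauto using iso_refl, iso_sym, iso_trans.
  apply iso_lu.
Qed.

Definition KM : ComMonoid := {| cm_str := Kset; cm_assoc := Kset_assoc;
  cm_comm := Kset_comm; cm_unitl := Kset_unitl |}.

(* Pic(M): weakly invertible objects and isomorphisms; two objects of
   Pic(M) are isomorphic in Pic(M) iff they are isomorphic in M. *)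
Definition PicOb := {A : Ob M | winv A}.
Definition Pic_iso (A B : PicOb) : Prop := iso (proj1_sig A) (proj1_sig B).
Definition Pic_tens (A B : PicOb) : PicOb :=
  exist _ (tens (proj1_sig A) (proj1_sig B)) (winv_tens (proj2_sig A) (proj2_sig B)).
Definition Pic_unit : PicOb := exist _ unit (winv_unit M).

Definition KPic : MonStr := KQ Pic_iso Pic_tens Pic_unit.

(* Pure[M] = K(P(M)) (same objects and tensor of objects as M) *)
Definition KP : MonStr := KQ (@Piso M) (@tens M) unit.

Definition K_iota : KPic -> KM := @Kmap _ _ Pic_iso (@iso M) (@proj1_sig _ _).
Definition K_pi : KM -> KP := @Kmap _ _ (@iso M) (@Piso M) (fun X => X).

End K.

Record SMFunctor (M N : SMC) := {
  Fo : Ob M -> Ob N;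
  Fm : forall X Y : Ob M, Hom X Y -> Hom (Fo X) (Fo Y);
  F_id : forall X, Fm (idm X) = idm (Fo X);
  F_comp : forall X Y Z (g : Hom Y Z) (f : Hom X Y), Fm (comp g f) = comp (Fm g) (Fm f);
  Fmu : forall X Y, Hom (tens (Fo X) (Fo Y)) (Fo (tens X Y));
  Fmu_iso : forall X Y, is_iso (Fmu X Y);
  Fmu_nat : forall X X' Y Y' (f : Hom X X') (g : Hom Y Y'),
      comp (Fmu X' Y') (tensm (Fm f) (Fm g)) = comp (Fm (tensm f g)) (Fmu X Y);
  Feps : Hom unit (Fo unit);
  Feps_iso : is_iso Feps;
  F_asc : forall X Y Z,
      comp (Fm (asc X Y Z)) (comp (Fmu (tens X Y) Z) (tensm (Fmu X Y) (idm (Fo Z))))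
      = comp (Fmu X (tens Y Z)) (comp (tensm (idm (Fo X)) (Fmu Y Z))
                                      (asc (Fo X) (Fo Y) (Fo Z)));
  F_lu : forall X,
      lu (Fo X) = comp (Fm (lu X)) (comp (Fmu unit X) (tensm Feps (idm (Fo X))));
  F_ru : forall X,
      ru (Fo X) = comp (Fm (ru X)) (comp (Fmu X unit) (tensm (idm (Fo X)) Feps));
  F_br : forall X Y,
      comp (Fm (br X Y)) (Fmu X Y) = comp (Fmu Y X) (br (Fo X) (Fo Y))
}.
Arguments Fo {M N}.
Arguments Fm {M N} _ {X Y}.

Definition sm_equivalence (M N : SMC) (F : SMFunctor M N) : Prop :=
  (forall X Y (g : Hom (Fo F X) (Fo F Y)), exists f : Hom X Y, Fm F f = g) /\
  (forall X Y (f f' : Hom X Y), Fm F f = Fm F f' -> f = f') /\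
  (forall Y : Ob N, exists X : Ob M, iso (Fo F X) Y).

Definition K_F (M N : SMC) (F : SMFunctor M N) : KM M -> KM N :=
  @Kmap _ _ (@iso M) (@iso N) (Fo F).

(* Main.v *)
Require Import Defs.
From Stdlib Require Import ClassicalEpsilon FunctionalExtensionality PropExtensionality ProofIrrelevance.
Set Implicit Arguments.
Unset Strict Implicit.

Lemma tens_comp_l (M : SMC) (X X' X'' Y : Ob M) (g : Hom X' X'') (f : Hom X X') :
  tensm (comp g f) (idm Y) = comp (tensm g (idm Y)) (tensm f (idm Y)).
Proof. rewrite <- tens_comp, comp_idl; reflexivity. Qed.

Lemma tens_comp_r (M : SMC) (X Y Y' Y'' : Ob M) (g : Hom Y' Y'') (f : Hom Y Y') :
  tensm (idm X) (comp g f) = comp (tensm (idm X) g) (tensm (idm X) f).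
Proof. rewrite <- tens_comp, comp_idl; reflexivity. Qed.

Lemma asc_nat_r (M : SMC) (X Y Z Z' : Ob M) (h : Hom Z Z') :
  comp (asc X Y Z') (tensm (idm (tens X Y)) h)
  = comp (tensm (idm X) (tensm (idm Y) h)) (asc X Y Z).
Proof. rewrite <- tens_id; apply asc_nat. Qed.

Lemma asc_nat_m (M : SMC) (X Y Y' Z : Ob M) (g : Hom Y Y') :
  comp (asc X Y' Z) (tensm (tensm (idm X) g) (idm Z))
  = comp (tensm (idm X) (tensm g (idm Z))) (asc X Y Z).
Proof. apply asc_nat. Qed.

Lemma asc_nat_l (M : SMC) (X X' Y Z : Ob M) (f : Hom X X') :
  comp (asc X' Y Z) (tensm (tensm f (idm Y)) (idm Z))
  = comp (tensm f (idm (tens Y Z))) (asc X Y Z).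
Proof.
  rewrite <- (tens_id Y Z). apply asc_nat.
Qed.

Lemma ru_faithful (M : SMC) (X Y : Ob M) (u v : Hom X Y) :
  tensm u (idm unit) = tensm v (idm unit) -> u = v.
Proof.
  intro H.
  assert (E : forall w : Hom X Y, w = comp (comp (ru Y) (tensm w (idm unit))) (ru_inv X)).
  { intro w. rewrite <- ru_nat, <- comp_assoc, ru_invr, comp_idr. reflexivity. }
  rewrite (E u), (E v), H. reflexivity.
Qed.

Lemma asc_cancel (M : SMC) (X Y Z W : Ob M) (f g : Hom W (tens (tens X Y) Z)) :
  comp (asc X Y Z) f = comp (asc X Y Z) g -> f = g.
Proof.
  intro H. rewrite <- (comp_idl f), <- (comp_idl g), <- (asc_invl X Y Z), <- !comp_assoc, H.
  reflexivity.
Qed.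

Lemma kelly_ru (M : SMC) (X Y : Ob M) :
  comp (tensm (idm X) (ru Y)) (asc X Y unit) = ru (tens X Y).
Proof.
  apply ru_faithful. apply asc_cancel.
  rewrite <- triangle.
  rewrite comp_assoc, asc_nat_r, <- comp_assoc, pentagon.
  rewrite comp_assoc, <- tens_comp_r, triangle.
  rewrite comp_assoc, <- asc_nat_m, <- comp_assoc, <- tens_comp_l. reflexivity.
Qed.

Lemma is_iso_id (M : SMC) (X : Ob M) : is_iso (idm X).
Proof. exists (idm X); rewrite comp_idl; auto. Qed.

Lemma is_iso_comp (M : SMC) (X Y Z : Ob M) (g : Hom Y Z) (f : Hom X Y) :
  is_iso g -> is_iso f -> is_iso (comp g f).
Proof.
  intros [g' [H1 H2]] [f' [H3 H4]]. exists (comp f' g'); split.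
  - rewrite comp_assoc, <- (comp_assoc f' g' g), H1, comp_idr; auto.
  - rewrite comp_assoc, <- (comp_assoc g f f'), H4, comp_idr; auto.
Qed.

Lemma is_iso_tens (M : SMC) (X X' Y Y' : Ob M) (f : Hom X X') (g : Hom Y Y') :
  is_iso f -> is_iso g -> is_iso (tensm f g).
Proof.
  intros [f' [H1 H2]] [g' [H3 H4]]. exists (tensm f' g').
  rewrite <- !tens_comp, H1, H2, H3, H4, !tens_id; auto.
Qed.

Lemma ru_inv_nat (M : SMC) (X Y : Ob M) (f : Hom X Y) :
  comp (tensm f (idm unit)) (ru_inv X) = comp (ru_inv Y) f.
Proof.
  rewrite <- (comp_idl (comp (tensm f (idm unit)) (ru_inv X))).
  rewrite <- (ru_invl Y), <- !comp_assoc, (comp_assoc (ru Y)), <- ru_nat.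
  rewrite <- !comp_assoc, ru_invr, comp_idr. reflexivity.
Qed.

Lemma PE_refl (M : SMC) (X Y : Ob M) (p : Pmor X Y) : Pequiv p p.
Proof. exists (idm _); split; [apply is_iso_id|]. rewrite tens_id, comp_idl; auto. Qed.

Lemma PE_sym (M : SMC) (X Y : Ob M) (p q : Pmor X Y) : Pequiv p q -> Pequiv q p.
Proof.
  intros [a [[a' [H1 H2]] H]]. exists a'; split; [exists a; auto|].
  rewrite <- H, comp_assoc, <- tens_comp_r, H1, tens_id, comp_idl; auto.
Qed.

Lemma PE_trans (M : SMC) (X Y : Ob M) (p q r : Pmor X Y) :
  Pequiv p q -> Pequiv q r -> Pequiv p r.
Proof.
  intros [a [Ha H]] [b [Hb H']]. exists (comp b a); split; [apply is_iso_comp; auto|].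
  rewrite tens_comp_r, <- comp_assoc, H, H'; auto.
Qed.

Lemma Pcomp_congr_r (M : SMC) (X Y Z : Ob M) (g : Pmor Y Z) (f f' : Pmor X Y) :
  Pequiv f f' -> Pequiv (Pcomp g f) (Pcomp g f').
Proof.
  intros [a [Ha H]]. exists (tensm (idm _) a); split; [apply is_iso_tens; auto; apply is_iso_id|].
  simpl. rewrite <- H.
  rewrite comp_assoc, <- asc_nat, <- !comp_assoc. f_equal.
  rewrite !comp_assoc, <- !tens_comp, tens_id, !comp_idl, !comp_idr. reflexivity.
Qed.

Lemma Pcomp_congr_l (M : SMC) (X Y Z : Ob M) (g g' : Pmor Y Z) (f : Pmor X Y) :
  Pequiv g g' -> Pequiv (Pcomp g f) (Pcomp g' f).
Proof.
  intros [a [Ha H]]. exists (tensm a (idm _)); split; [apply is_iso_tens; auto; apply is_iso_id|].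
  simpl. rewrite <- H.
  rewrite comp_assoc, <- asc_nat, <- !comp_assoc. f_equal.
  rewrite tens_comp_l, comp_assoc. reflexivity.
Qed.

Lemma Passoc (M : SMC) (X Y Z W : Ob M) (h : Pmor Z W) (g : Pmor Y Z) (f : Pmor X Y) :
  Pequiv (Pcomp (Pcomp h g) f) (Pcomp h (Pcomp g f)).
Proof.
  exists (asc (pA h) (pA g) (pA f)); split; [exists (asc_inv _ _ _); split; apply M|].
  simpl. rewrite !tens_comp_l, <- !comp_assoc.
  rewrite (comp_assoc (asc W _ _) (tensm (asc W _ _) _)).
  rewrite (comp_assoc (tensm (idm W) _)), <- pentagon, <- comp_assoc. f_equal.
  rewrite comp_assoc, asc_nat_l, <- comp_assoc. reflexivity.
Qed.

Lemma Pid_l (M : SMC) (X Y : Ob M) (f : Pmor X Y) : Pequiv (Pcomp (Pid Y) f) f.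
Proof.
  exists (lu (pA f)); split; [exists (lu_inv _); split; apply M|].
  simpl. rewrite comp_assoc, triangle, comp_assoc, <- tens_comp_l, ru_invr, tens_id, comp_idl.
  reflexivity.
Qed.

Lemma Pid_r (M : SMC) (X Y : Ob M) (f : Pmor X Y) : Pequiv (Pcomp f (Pid X)) f.
Proof.
  exists (ru (pA f)); split; [exists (ru_inv _); split; apply M|].
  simpl. rewrite ru_inv_nat, comp_assoc, kelly_ru, comp_assoc, ru_invr, comp_idl.
  reflexivity.
Qed.

Lemma cancel_l (M : SMC) (X Y W : Ob M) (f : Hom Y X) (g : Hom X Y) (h : Hom W X) :
  comp f g = idm X -> comp f (comp g h) = h.
Proof. intro E; rewrite comp_assoc, E, comp_idl; reflexivity. Qed.

Lemma winv_sym_inv (M : SMC) (A B : Ob M) :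
  iso (tens A B) unit -> iso (tens B A) unit -> winv B.
Proof. intros H1 H2; exists A; split; auto. Qed.

Lemma Pright_inv (M : SMC) (X Y A : Ob M) (wA : winv A) (s : Hom X (tens Y A)) :
  is_iso s -> exists (B : Ob M) (wB : winv B) (t : Hom Y (tens X B)),
    is_iso t /\ Pequiv (Pcomp (Build_Pmor wA s) (Build_Pmor wB t)) (Pid Y).
Proof.
  intros [s' [Hs1 Hs2]].
  destruct wA as [B [[b [b' [Hb1 Hb2]]] H2]].
  assert (wB : winv B).
  { apply (@winv_sym_inv M A B); auto. exists b, b'; auto. }
  exists B, wB.
  exists (comp (tensm s' (idm B)) (comp (asc_inv Y A B) (comp (tensm (idm Y) b') (ru_inv Y)))).
  split.
  - repeat apply is_iso_comp.
    + apply is_iso_tens; [exists s; auto| apply is_iso_id].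
    + exists (asc Y A B); split; apply M.
    + apply is_iso_tens; [apply is_iso_id| exists b; auto].
    + exists (ru Y); split; apply M.
  - exists b; split; [exists b'; auto|]. simpl.
    assert (E1 : comp (tensm s (idm B)) (tensm s' (idm B)) = idm _).
    { rewrite <- tens_comp_l, Hs2, tens_id; reflexivity. }
    assert (E2 : comp (tensm (idm Y) b) (tensm (idm Y) b') = idm _).
    { rewrite <- tens_comp_r, Hb2, tens_id; reflexivity. }
    rewrite (cancel_l _ E1), (cancel_l _ (asc_invr Y A B)), (cancel_l _ E2). reflexivity.
Qed.

Lemma iso_to_Piso (M : SMC) (X Y A : Ob M) (wA : winv A) (s : Hom X (tens Y A)) :
  is_iso s -> Piso X Y.
Proof.
  intro Hs.
  destruct (Pright_inv wA Hs) as [B [wB [t [Ht E1]]]].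
  destruct (Pright_inv wB Ht) as [C [wC [u [Hu E2]]]].
  set (f := Build_Pmor wA s) in *. set (g := Build_Pmor wB t) in *.
  set (f2 := Build_Pmor wC u) in *.
  assert (Ef : Pequiv f f2).
  { eapply PE_trans; [apply PE_sym, Pid_r|].
    eapply PE_trans; [apply Pcomp_congr_r, PE_sym, E2|].
    eapply PE_trans; [apply PE_sym, Passoc|].
    eapply PE_trans; [apply Pcomp_congr_l, E1|].
    apply Pid_l. }
  exists f, g; split; auto.
  eapply PE_trans; [apply Pcomp_congr_r, Ef| exact E2].
Qed.

Lemma iso_of_lr (M : SMC) (X Y : Ob M) (h : Hom X Y) (f : Hom Y X) (L : Hom Y X) :
  comp h f = idm Y -> comp L h = idm X -> is_iso h.
Proof.
  intros E1 E2. exists f; split; auto.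
  assert (f = L).
  { rewrite <- (comp_idl f), <- E2, <- comp_assoc, E1, comp_idr; reflexivity. }
  subst; auto.
Qed.

Lemma Piso_to (M : SMC) (X Y : Ob M) :
  Piso X Y -> exists A, winv A /\ iso (tens Y A) X.
Proof.
  intros [f [g [[a [Ha Ea]] [b [Hb Eb]]]]]. simpl in Ea, Eb.
  exists (pA f); split; [apply pA_winv|].
  set (c := comp (ru X) (comp (tensm (idm X) a) (asc X (pA g) (pA f)))).
  assert (Hc : is_iso c).
  { unfold c; repeat apply is_iso_comp.
    - exists (ru_inv X); split; apply M.
    - apply is_iso_tens; auto; apply is_iso_id.
    - exists (asc_inv _ _ _); split; apply M. }
  destruct Hc as [c' [Hc1 Hc2]].
  set (k := comp (ru Y) (comp (tensm (idm Y) b) (comp (asc Y (pA f) (pA g)) (tensm (pf f) (idm (pA g)))))).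
  assert (Ek : comp k (pf g) = idm Y).
  { unfold k. rewrite <- !comp_assoc.
    transitivity (comp (ru Y) (ru_inv Y)); [apply (f_equal (comp (ru Y))); exact Eb| apply M]. }
  exists (comp c (tensm (pf g) (idm (pA f)))).
  apply (@iso_of_lr M _ _ _ (pf f) (comp (tensm k (idm (pA f))) c')).
  - unfold c. rewrite <- !comp_assoc.
    transitivity (comp (ru X) (ru_inv X)); [apply (f_equal (comp (ru X))); exact Ea| apply M].
  - rewrite <- comp_assoc, (cancel_l _ Hc1), <- tens_comp_l, Ek, tens_id. reflexivity.
Qed.

Lemma class_inj (T : Type) (R : T -> T -> Prop) (Rrefl : forall x, R x x) (x y : T) :
  class R x = class R y -> R x y.
Proof.
  intro H. apply (f_equal (@proj1_sig _ _)) in H. simpl in H.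
  change ((R x) y). rewrite H. apply Rrefl.
Qed.

Lemma sig_eq (A : Type) (P : A -> Prop) (u v : sig P) : proj1_sig u = proj1_sig v -> u = v.
Proof. destruct u, v; simpl; intros ->; f_equal; apply proof_irrelevance. Qed.


Lemma Urel_refl (A : ComMonoid) (x : A) : Urel x x.
Proof. exists mone; split; [apply is_unit_one| rewrite cm_unitl; reflexivity]. Qed.

Lemma Urel_sym (A : ComMonoid) (x y : A) : Urel x y -> Urel y x.
Proof.
  intros [u [[v Hv] Hx]]. exists v; split.
  - exists u; rewrite cm_comm; exact Hv.
  - rewrite Hx, cm_assoc, (cm_comm v u), Hv, cm_unitl; reflexivity.
Qed.

Lemma Urel_trans (A : ComMonoid) (x y z : A) : Urel x y -> Urel y z -> Urel x z.
Proof.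
  intros [u [Hu Hx]] [v [Hv Hy]]. exists (mop u v); split; [apply is_unit_mop; auto|].
  rewrite Hx, Hy, cm_assoc; reflexivity.
Qed.

Lemma Urel_mop (A : ComMonoid) (x x' y y' : A) :
  Urel x x' -> Urel y y' -> Urel (mop x y) (mop x' y').
Proof.
  intros [u [Hu Hx]] [v [Hv Hy]]. exists (mop u v); split; [apply is_unit_mop; auto|].
  rewrite Hx, Hy.
  rewrite <- cm_assoc, (cm_assoc x' v y'), (cm_comm x' v), <- (cm_assoc v x' y'), cm_assoc.
  reflexivity.
Qed.

Lemma cUrel (A : ComMonoid) (x y : A) : Urel x y -> class (@Urel A) x = class (@Urel A) y.
Proof. apply class_eq; [apply Urel_sym| apply Urel_trans]. Qed.

Lemma rep_cUrel (A : ComMonoid) (x : A) : Urel (rep (class (@Urel A) x)) x.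
Proof. apply rep_class; [apply Urel_refl| apply Urel_sym]. Qed.

Lemma hom_unit (A B : ComMonoid) (f : A -> B) (x : A) :
  mon_hom f -> is_unit x -> is_unit (f x).
Proof. intros [Hm H1] [y Hy]; exists (f y); rewrite <- Hm, Hy; exact H1. Qed.

Lemma hom_Urel (A B : ComMonoid) (f : A -> B) (x y : A) :
  mon_hom f -> Urel x y -> Urel (f x) (f y).
Proof.
  intros Hf [u [Hu Hx]]. exists (f u); split; [apply hom_unit; auto|].
  rewrite Hx; apply Hf.
Qed.

Lemma mon_iso_comp (A B C : MonStr) (f : A -> B) (g : B -> C) :
  mon_iso f -> mon_iso g -> mon_iso (fun x => g (f x)).
Proof.
  intros [[Hf1 Hf2] [f' [Hf3 Hf4]]] [[Hg1 Hg2] [g' [Hg3 Hg4]]].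
  split; [split|].
  - intros x y; rewrite Hf1, Hg1; reflexivity.
  - rewrite Hf2, Hg2; reflexivity.
  - exists (fun z => f' (g' z)); split; intros.
    + rewrite Hg3, Hf3; reflexivity.
    + rewrite Hf4, Hg4; reflexivity.
Qed.

Lemma mon_iso_sym (A B : MonStr) (f : A -> B) :
  mon_iso f -> exists g : B -> A, mon_iso g /\ (forall x, g (f x) = x) /\ (forall y, f (g y) = y).
Proof.
  intros [[Hf1 Hf2] [g [H1 H2]]]. exists g; split; [|split; auto].
  split; [split|].
  - intros x y. rewrite <- (H2 x) at 1. rewrite <- (H2 y) at 1. rewrite <- Hf1, H1. reflexivity.
  - rewrite <- Hf2, H1; reflexivity.
  - exists f; split; auto.
Qed.

Definition Umap (A B : ComMonoid) (f : A -> B) (Hf : mon_hom f) (u : Umon A) : Umon B :=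
  exist _ (f (proj1_sig u)) (hom_unit Hf (proj2_sig u)).

Lemma Umap_iso (A B : ComMonoid) (f : A -> B) (Hf : mon_iso f) :
  mon_iso (Umap (proj1 Hf)).
Proof.
  destruct (mon_iso_sym Hf) as [g [Hg [H1 H2]]].
  split; [split|].
  - intros x y; apply sig_eq; simpl; apply (proj1 Hf).
  - apply sig_eq; simpl; apply (proj1 Hf).
  - exists (Umap (proj1 Hg)); split; intro; apply sig_eq; simpl; auto.
Qed.

Definition Qmap (A B : ComMonoid) (f : A -> B) (q : QUmon A) : QUmon B :=
  class (@Urel B) (f (rep q)).

Lemma Qmap_hom (A B : ComMonoid) (f : A -> B) : mon_hom f -> mon_hom (Qmap f).
Proof.
  intro Hf. split.
  - intros x y. unfold Qmap; simpl. apply cUrel.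
    eapply Urel_trans; [apply hom_Urel; [exact Hf| apply rep_cUrel]|].
    rewrite (proj1 Hf). apply Urel_mop; apply Urel_sym, rep_cUrel.
  - unfold Qmap; simpl. apply cUrel.
    eapply Urel_trans; [apply hom_Urel; [exact Hf| apply rep_cUrel]|].
    rewrite (proj2 Hf). apply Urel_refl.
Qed.

Lemma Qmap_iso (A B : ComMonoid) (f : A -> B) : mon_iso f -> mon_iso (Qmap f).
Proof.
  intro Hf. destruct (mon_iso_sym Hf) as [g [Hg [H1 H2]]].
  split; [apply Qmap_hom, Hf|].
  exists (Qmap g); split; intro q; unfold Qmap.
  - rewrite <- (class_rep q) at 2. apply cUrel.
    eapply Urel_trans; [apply hom_Urel; [apply Hg| apply rep_cUrel]|]. rewrite H1; apply Urel_refl.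
  - rewrite <- (class_rep q) at 2. apply cUrel.
    eapply Urel_trans; [apply hom_Urel; [apply Hf| apply rep_cUrel]|]. rewrite H2; apply Urel_refl.
Qed.

Lemma ciso (M : SMC) (X Y : Ob M) : iso X Y -> class (@iso M) X = class (@iso M) Y.
Proof. apply class_eq; [apply iso_sym| apply iso_trans]. Qed.

Lemma rep_ciso (M : SMC) (X : Ob M) : iso (rep (class (@iso M) X)) X.
Proof. apply rep_class; [apply iso_refl| apply iso_sym]. Qed.

Lemma iso_hom (M : SMC) (X Y : Ob M) : iso X Y -> exists s : Hom X Y, is_iso s.
Proof. auto. Qed.

Lemma iso_Piso (M : SMC) (X Y : Ob M) : iso X Y -> Piso X Y.
Proof.
  intro H. assert (H' : iso X (tens Y unit)).
  { eapply iso_trans; [exact H| apply iso_sym, iso_ru]. }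
  destruct H' as [s Hs]. exact (iso_to_Piso (winv_unit M) Hs).
Qed.

Lemma Piso_refl (M : SMC) (X : Ob M) : Piso X X.
Proof. apply iso_Piso, iso_refl. Qed.

Lemma Piso_sym (M : SMC) (X Y : Ob M) : Piso X Y -> Piso Y X.
Proof.
  intro H. destruct (Piso_to H) as [A [wA HA]].
  destruct wA as [B [H1 H2]].
  assert (wB : winv B) by (exists A; auto).
  assert (E : iso Y (tens X B)).
  { eapply iso_trans; [apply iso_sym, iso_ru|].
    eapply iso_trans; [apply iso_tens; [apply iso_refl| apply iso_sym, H1]|].
    eapply iso_trans; [apply iso_sym, iso_asc|].
    apply iso_tens; [exact HA| apply iso_refl]. }
  destruct E as [s Hs]. exact (iso_to_Piso wB Hs).
Qed.

Lemma Piso_trans (M : SMC) (X Y Z : Ob M) : Piso X Y -> Piso Y Z -> Piso X Z.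
Proof.
  intros H H'. destruct (Piso_to H) as [A [wA HA]]. destruct (Piso_to H') as [A' [wA' HA']].
  assert (E : iso X (tens Z (tens A' A))).
  { eapply iso_trans; [apply iso_sym, HA|].
    eapply iso_trans; [apply iso_tens; [apply iso_sym, HA'| apply iso_refl]|].
    apply iso_asc. }
  destruct E as [s Hs]. exact (iso_to_Piso (winv_tens wA' wA) Hs).
Qed.

Lemma cPiso (M : SMC) (X Y : Ob M) : Piso X Y -> class (@Piso M) X = class (@Piso M) Y.
Proof. apply class_eq; [apply Piso_sym| apply Piso_trans]. Qed.

Lemma rep_cPiso (M : SMC) (X : Ob M) : Piso (rep (class (@Piso M) X)) X.
Proof. apply rep_class; [apply Piso_refl| apply Piso_sym]. Qed.

Lemma unit_winv (M : SMC) (x : KM M) : is_unit x -> winv (rep x).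
Proof.
  intros [y Hy]. change (class (@iso M) (tens (rep x) (rep y)) = class (@iso M) unit) in Hy.
  apply class_inj in Hy; [|apply iso_refl].
  exists (rep y); split; auto. eapply iso_trans; [apply iso_br| exact Hy].
Qed.

Lemma winv_is_unit (M : SMC) (A : Ob M) : winv A -> is_unit (class (@iso M) A : KM M).
Proof.
  intros [B [H1 H2]]. exists (class (@iso M) B).
  change (class (@iso M) (tens (rep (class (@iso M) A)) (rep (class (@iso M) B))) = class (@iso M) unit).
  apply ciso. eapply iso_trans; [apply iso_tens; apply rep_ciso| exact H1].
Qed.

Lemma Piso_Urel (M : SMC) (X Y : Ob M) :
  Piso X Y -> Urel (class (@iso M) X : KM M) (class (@iso M) Y).
Proof.
  intro H. destruct (Piso_to H) as [A [wA HA]].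
  exists (class (@iso M) A); split; [apply winv_is_unit; auto|].
  change (class (@iso M) X = class (@iso M) (tens (rep (class (@iso M) A)) (rep (class (@iso M) Y)))).
  apply ciso. eapply iso_trans; [apply iso_sym, HA|].
  eapply iso_trans; [apply iso_br|].
  apply iso_tens; apply iso_sym, rep_ciso.
Qed.

Lemma Urel_Piso (M : SMC) (x y : KM M) : Urel x y -> Piso (rep x) (rep y).
Proof.
  intros [u [Hu Hx]]. pose proof (unit_winv Hu) as wu.
  assert (E : iso (rep x) (tens (rep y) (rep u))).
  { rewrite Hx. change (iso (rep (class (@iso M) (tens (rep u) (rep y)))) (tens (rep y) (rep u))).
    eapply iso_trans; [apply rep_ciso| apply iso_br]. }
  destruct E as [s Hs]. exact (iso_to_Piso wu Hs).
Qed.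

Definition Pic_iso_refl (M : SMC) (A : PicOb M) : Pic_iso A A := iso_refl _.
Lemma Pic_iso_sym (M : SMC) (A B : PicOb M) : Pic_iso A B -> Pic_iso B A.
Proof. apply iso_sym. Qed.
Lemma Pic_iso_trans (M : SMC) (A B C : PicOb M) : Pic_iso A B -> Pic_iso B C -> Pic_iso A C.
Proof. apply iso_trans. Qed.

Lemma cPic (M : SMC) (A B : PicOb M) : Pic_iso A B -> class (@Pic_iso M) A = class (@Pic_iso M) B.
Proof. apply class_eq; [apply Pic_iso_sym| apply Pic_iso_trans]. Qed.

Lemma rep_cPic (M : SMC) (A : PicOb M) : Pic_iso (rep (class (@Pic_iso M) A)) A.
Proof. apply rep_class; [apply Pic_iso_refl| apply Pic_iso_sym]. Qed.

Definition phiM (M : SMC) (c : KPic M) : Umon (KM M) :=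
  exist _ (class (@iso M) (proj1_sig (rep c))) (winv_is_unit (proj2_sig (rep c))).

Definition phiM' (M : SMC) (u : Umon (KM M)) : KPic M :=
  class (@Pic_iso M) (exist _ (rep (proj1_sig u)) (unit_winv (proj2_sig u))).

Definition psiM (M : SMC) (c : KP M) : QUmon (KM M) :=
  class (@Urel (KM M)) (class (@iso M) (rep c)).

Definition psiM' (M : SMC) (q : QUmon (KM M)) : KP M :=
  class (@Piso M) (rep (rep q)).

Lemma part1 (M : SMC) :
  exists (phi : KPic M -> Umon (KM M)) (psi : KP M -> QUmon (KM M)),
    mon_iso phi /\ mon_iso psi /\
    (forall c : KPic M, Uincl (phi c) = K_iota c) /\
    (forall x : KM M, psi (K_pi x) = Uquot x).
Proof.
  exists (@phiM M), (@psiM M). split; [|split; [|split]].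
  - split; [split|].
    + intros c d. apply sig_eq. simpl. apply ciso.
      eapply iso_trans; [apply rep_cPic|]. simpl.
      apply iso_tens; apply iso_sym, rep_ciso.
    + apply sig_eq. simpl. apply ciso. apply rep_cPic.
    + exists (@phiM' M); split.
      * intro c. unfold phiM'. transitivity (class (@Pic_iso M) (rep c)); [|apply class_rep]. apply cPic.
        unfold Pic_iso; simpl. apply rep_ciso.
      * intro u. apply sig_eq. simpl. transitivity (class (@iso M) (rep (proj1_sig u))); [|apply class_rep].
        apply ciso. apply rep_cPic.
  - split; [split|].
    + intros c d. unfold psiM. apply (@cUrel (KM M)).
      eapply Urel_trans; [apply Piso_Urel, rep_cPiso|].
      replace (class (@iso M) (tens (rep c) (rep d)))
        with (mop (class (@iso M) (rep c) : KM M) (class (@iso M) (rep d))).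
      * apply Urel_mop; apply Urel_sym, rep_cUrel.
      * simpl. apply ciso. apply iso_tens; apply rep_ciso.
    + unfold psiM; simpl. apply (@cUrel (KM M)). apply Piso_Urel, rep_cPiso.
    + exists (@psiM' M); split.
      * intro c. unfold psiM', psiM. transitivity (class (@Piso M) (rep c)); [|apply class_rep]. apply cPiso.
        eapply Piso_trans; [apply Urel_Piso, rep_cUrel|].
        apply iso_Piso, rep_ciso.
      * intro q. unfold psiM', psiM. transitivity (class (@Urel (KM M)) (rep q)); [|apply class_rep]. apply (@cUrel (KM M)).
        eapply Urel_trans; [apply Piso_Urel, rep_cPiso|].
        rewrite class_rep. apply Urel_refl.
  - intro c. reflexivity.
  - intro x. unfold psiM, K_pi, Kmap, Uquot. apply (@cUrel (KM M)).
    eapply Urel_trans; [apply Piso_Urel, rep_cPiso|].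
    rewrite class_rep. apply Urel_refl.
Qed.

Lemma F_iso (M N : SMC) (F : SMFunctor M N) (X Y : Ob M) : iso X Y -> iso (Fo F X) (Fo F Y).
Proof.
  intros [f [g [H1 H2]]]. exists (Fm F f), (Fm F g).
  rewrite <- !F_comp, H1, H2, !F_id; auto.
Qed.

Lemma F_tens (M N : SMC) (F : SMFunctor M N) (X Y : Ob M) :
  iso (tens (Fo F X) (Fo F Y)) (Fo F (tens X Y)).
Proof. exists (Fmu F X Y); apply Fmu_iso. Qed.

Lemma F_unit (M N : SMC) (F : SMFunctor M N) : iso unit (Fo F unit).
Proof. exists (Feps F); apply Feps_iso. Qed.

Lemma F_reflect (M N : SMC) (F : SMFunctor M N) (X Y : Ob M) :
  sm_equivalence F -> iso (Fo F X) (Fo F Y) -> iso X Y.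
Proof.
  intros [Hfull [Hfaith _]] [g [g' [H1 H2]]].
  destruct (Hfull _ _ g) as [f Hf]. destruct (Hfull _ _ g') as [f' Hf'].
  exists f, f'; split; apply Hfaith; rewrite F_comp, F_id, Hf, Hf'; auto.
Qed.

Lemma K_F_iso (M N : SMC) (F : SMFunctor M N) :
  sm_equivalence F -> mon_iso (A := KM M) (B := KM N) (K_F F).
Proof.
  intro HF. split; [split|].
  - intros x y. unfold K_F, Kmap. apply ciso.
    change (iso (Fo F (rep (class (@iso M) (tens (rep x) (rep y)))))
               (tens (rep (class (@iso N) (Fo F (rep x)))) (rep (class (@iso N) (Fo F (rep y)))))).
    eapply iso_trans; [apply F_iso, rep_ciso|].
    eapply iso_trans; [apply iso_sym, F_tens|].
    apply iso_tens; apply iso_sym, rep_ciso.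
  - unfold K_F, Kmap. apply ciso.
    change (iso (Fo F (rep (class (@iso M) unit))) unit).
    eapply iso_trans; [apply F_iso, rep_ciso| apply iso_sym, F_unit].
  - destruct HF as [H1 [H2 Hess]].
    pose (pre := fun Y : Ob N => proj1_sig (constructive_indefinite_description _ (Hess Y))).
    assert (Hpre : forall Y, iso (Fo F (pre Y)) Y).
    { intro Y. unfold pre. apply (proj2_sig (constructive_indefinite_description _ (Hess Y))). }
    exists (fun y : KM N => class (@iso M) (pre (rep y)) : KM M); split.
    + intro x. unfold K_F, Kmap.
      transitivity (class (@iso M) (rep x)); [|apply class_rep].
      apply ciso. apply (@F_reflect M N F); [split; auto|].
      eapply iso_trans; [apply Hpre| apply rep_ciso].
    + intro y. unfold K_F, Kmap.
      transitivity (class (@iso N) (rep y)); [|apply class_rep].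
      apply ciso. eapply iso_trans; [apply F_iso, rep_ciso| apply Hpre].
Qed.

Theorem proposition8p1 :
  (forall M : SMC,
     exists (phi : KPic M -> Umon (KM M)) (psi : KP M -> QUmon (KM M)),
       mon_iso phi /\ mon_iso psi /\
       (forall c : KPic M, Uincl (phi c) = K_iota c) /\
       (forall x : KM M, psi (K_pi x) = Uquot x))
  /\
  (forall (M N : SMC) (F : SMFunctor M N),
     sm_equivalence F ->
     mon_iso (A := KM M) (B := KM N) (K_F F) /\
     exists (phi0 : KPic M -> KPic N) (phi2 : KP M -> KP N),
       mon_iso phi0 /\ mon_iso phi2 /\
       (forall c : KPic M, K_iota (phi0 c) = K_F F (K_iota c)) /\
       (forall x : KM M, phi2 (K_pi x) = K_pi (K_F F x))).
Proof.
  split; [exact part1|].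
  intros M N F HF.
  pose proof (K_F_iso HF) as HK.
  split; [exact HK|].
  destruct (part1 M) as [phM [psM [HphM [HpsM [E1M E2M]]]]].
  destruct (part1 N) as [phN [psN [HphN [HpsN [E1N E2N]]]]].
  destruct (mon_iso_sym HphN) as [phN' [HphN' [A1 A2]]].
  destruct (mon_iso_sym HpsN) as [psN' [HpsN' [B1 B2]]].
  exists (fun c => phN' (Umap (proj1 HK) (phM c))).
  exists (fun p => psN' (Qmap (K_F F) (psM p))).
  split; [|split; [|split]].
  - apply (mon_iso_comp (mon_iso_comp HphM (Umap_iso HK)) HphN').
  - apply (mon_iso_comp (mon_iso_comp HpsM (Qmap_iso HK)) HpsN').
  - intro c. rewrite <- E1N, A2. unfold Umap; simpl. apply f_equal. apply E1M.
  - intro x. rewrite E2M. rewrite <- B1, E2N. f_equal.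
    unfold Qmap, Uquot. apply (@cUrel (KM N)).
    apply hom_Urel; [apply HK| apply rep_cUrel].
Qed.
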